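(* Let $(\Omega,\mathcal A)$ be a measurable space and let $K$ be a random compact set in $\mathbb C^n$. If $K$ takes countably many values, or if $\left|\bigcup_{\omega\in\Omega}K(\omega)\setminus\overline{\operatorname{int}K(\omega)}\right|\le\aleph_0$, then $K$ is uniformly separable. Moreover, if $K(\omega)$ is the closure of a bounded open subset of $\mathbb C^n$ for all $\omega\in\Omega$, then $K$ is uniformly separable.
   Context: A random compact set is a measurable map from $\Omega$ to the space of non-empty compact subsets of $\mathbb C^n$ with the Hausdorff distance and its Borel $\sigma$-algebra. A random compact set $K$ is uniformly separable if there is a countable set $E\subset\mathbb C^n$ such that $E\cap K(\omega)$ is dense in $K(\omega)$ for every $\omega\in\Omega$. *)

(* Defs.v *)
(* C^n is modelled as row vectors 'rV[R[i]]_n over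
   the complex numbers R[i] (mathcomp-real-closed) of an arbitrary realType R. *)
From HB Require Import structures.
From mathcomp Require Import all_boot all_order all_algebra.
From mathcomp Require Import all_classical all_reals all_analysis.
From mathcomp Require Import complex.
Import Order.TTheory GRing.Theory Num.Theory.
Import numFieldNormedType.Exports.

Set Implicit Arguments.
Unset Strict Implicit.
Unset Printing Implicit Defensive.

Local Open Scope ring_scope.
Local Open Scope classical_set_scope.

(* The complex numbers R[i] carry the standard metric topology of a
   numFieldType (ball z e w <-> |z - w| < e); 'rV[R[i]]_n then carries the
   product topology, i.e. the usual topology of C^n. *)
HB.instance Definition _ (R : rcfType) :=
  PseudoPointedMetric.copy (complex R) (complex R)^o.

Notation Cn R n := ('rV[(complex R)]_n).

Definition edist (R : realType) (n : nat) (x y : Cn R n) : R :=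
  Num.sqrt (\sum_(i < n) (Normc.normc (x ord0 i - y ord0 i)) ^+ 2).

Definition nonempty_compacts (R : realType) (n : nat) : set (set (Cn R n)) :=
  [set A | A !=set0 /\ compact A].

(* For non-empty compact A, B : d_H(A,B) < e  iff  this holds. *)
Definition hausdorff_lt (R : realType) (n : nat) (e : R) (A B : set (Cn R n)) :=
  (forall x, A x -> exists2 y, B y & edist x y < e) /\
  (forall y, B y -> exists2 x, A x & edist x y < e).

Arguments nonempty_compacts : clear implicits.

Definition hausdorff_open (R : realType) (n : nat) (U : set (set (Cn R n))) :=
  U `<=` nonempty_compacts R n /\
  forall A, U A -> exists2 e : R, 0 < e &
    forall B, nonempty_compacts R n B -> hausdorff_lt e A B -> U B.

Definition hausdorff_borel (R : realType) (n : nat) : set (set (set (Cn R n))) :=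
  <<s nonempty_compacts R n, (fun U : set (set (Cn R n)) => hausdorff_open U) >>.

Arguments hausdorff_borel : clear implicits.

Definition random_compact_set (d : measure_display) (T : measurableType d)
    (R : realType) (n : nat) (K : T -> set (Cn R n)) : Prop :=
  (forall w, nonempty_compacts R n (K w)) /\
  (forall B, hausdorff_borel R n B -> measurable (K @^-1` B)).

(* Uniform separability: a countable E such that E `&` K w is dense in K w
   (for the closed set K w this means K w is contained in closure (E `&` K w)). *)
Definition uniformly_separable (T : Type) (R : realType) (n : nat)
    (K : T -> set (Cn R n)) : Prop :=
  exists2 E : set (Cn R n), countable E &
    forall w, K w `<=` closure (E `&` K w).

(* Main.v *)
Require Import Defs.
From HB Require Import structures.
From mathcomp Require Import all_boot all_order all_algebra.
From mathcomp Require Import all_classical all_reals all_analysis.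
From mathcomp Require Import complex.
From mathcomp Require Import lra finmap.
Import Order.TTheory GRing.Theory Num.Theory.
Import numFieldNormedType.Exports.
Local Open Scope ring_scope.
Local Open Scope classical_set_scope.
Section S.
Variables (R : realType) (n : nat).
Lemma ballCnE (x y : Cn R n) e : ball x e y <-> (0 < e /\ forall j, `|x ord0 j - y ord0 j| < e).
Proof.
rewrite /ball /=. rewrite /mx_ball /ball /=.
split=> -[e0 H]; split=> // i j. by rewrite (ord1 i).
Qed.
Lemma ratapp (a e : R) : 0 < e -> exists q : rat, `|a - ratr q| < e.
Proof.
move=> e0; have : a < a + e by rewrite ltrDl.
move=> /rat_in_itvoo[q]; rewrite in_itv /= => /andP[h1 h2]; exists q.
rewrite ltr_norml; apply/andP; split; lra.
Qed.
Lemma approxC (z : complex R) (e : R) : 0 < e ->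
  exists pq : rat * rat, `|z - ((ratr pq.1) +i* (ratr pq.2))%C| < (e%:C)%C.
Proof.
move=> e0; case: z => a b.
have e20 : 0 < e / 2 by lra.
have [p hp] := @ratapp a _ e20; have [q hq] := @ratapp b _ e20.
exists (p, q) => /=.
rewrite normc_def /= ltcR.
move: hp hq; rewrite !ltr_norml => /andP[h1 h2] /andP[h3 h4].
have hs : (a - ratr p) ^+ 2 + (b - ratr q) ^+ 2 < e ^+ 2 by nra.
rewrite -[X in _ < X](@ger0_norm _ e) ?ltW // -sqrtr_sqr ltr_sqrt //.
by rewrite exprn_gt0.
Qed.

Definition ratpt (f : {ffun 'I_n -> rat * rat}) : Cn R n :=
  \row_j ((ratr (f j).1) +i* (ratr (f j).2))%C.

Lemma Dn_countable : countable (range ratpt).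
Proof. exact: card_le_trans (card_image_le _ _) (countableP _). Qed.

Lemma posC (e : complex R) : 0 < e -> exists2 a : R, 0 < a & e = (a%:C)%C.
Proof. by case: e => a b; rewrite ltcE /= => /andP[/eqP -> a0]; exists a. Qed.

Lemma Dn_dense (x : Cn R n) N : nbhs x N -> exists2 y, range ratpt y & N y.
Proof.
move=> /nbhs_ballP[e e0 heN].
have [a a0 ea] := @posC e e0.
have /fin_all_exists[g hg] : forall j : 'I_n, exists pq : rat * rat,
   `|x ord0 j - ((ratr pq.1) +i* (ratr pq.2))%C| < (a%:C)%C.
  by move=> j; apply: approxC.
exists (ratpt (finfun g)); first by exists (finfun g).
apply: heN; apply/ballCnE; split => // j.
by rewrite /ratpt mxE ffunE ea.
Qed.

Lemma compact_sep (A : set (Cn R n)) : exists S : set (Cn R n), countable S /\ (S `<=` A) /\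
  (compact A -> A `<=` closure S).
Proof.
have [cA|ncA] := pselect (compact A); last first.
  by exists set0; split; [exact: countable0| split => //].
have : forall q : rat, exists F : {fset Cn R n}, ([set` F] `<=` A) /\ (0 < (ratr q : R) -> A `<=` \bigcup_(y in [set` F]) ball y ((ratr q)%:C)%C).
  move=> q; have [q0|nq0] := pselect (0 < (ratr q : R)); last first.
    by exists fset0; split => // ? /=; rewrite inE.
  have q0' : 0 < ((ratr q : R)%:C)%C by rewrite ltcR.
  move: cA; rewrite compact_cover => /(_ _ A (fun y => (ball y ((ratr q)%:C)%C)°)).
  case.
  - by move=> i _; exact: open_interior.
  - by move=> x Ax; exists x => //; exact: nbhsx_ballx.
  move=> F FA AF; exists F; split.
    by move=> y /= yF; have := FA y yF; rewrite in_setE.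
  move=> _ x /AF [y yF hy]; exists y => //; exact: interior_subset.
move=> /choice[F hF].
exists (\bigcup_(q in setT) [set` F q]); split.
  by apply: bigcup_countable; [exact: countableP| move=> q _; exact: countable_fset].
split; first by move=> y [q _ yq]; have [+ _] := hF q; apply.
move=> _ x Ax N /nbhs_ballP[e e0 heN].
have [a a0 ea] := @posC e e0.
have : 0 < a by [].
move=> /(@rat_in_itvoo _ 0 a)[q]; rewrite in_itv /= => /andP[q0 qa].
have [_ /(_ q0 x Ax)[y yF hy]] := hF q.
exists y; split; first by exists q.
apply: heN; rewrite ea; apply: le_ball (ball_sym hy).
by rewrite lecR ltW.
Qed.
End S.

Lemma sep_bd (R : realType) (n : nat) (T : Type) (K : T -> set (Cn R n)) :
  countable (\bigcup_(w in [set: T]) (K w `\` closure (interior (K w)))) ->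
  uniformly_separable K.
Proof.
set Bd := \bigcup_(w in _) _ => cB.
exists (\bigcup_(b in [set: bool]) (if b then range (@ratpt R n) else Bd)).
  by apply: bigcup_countable; [exact: countableP| case=> _ //; exact: Dn_countable].
move=> w x Kx.
have [xB|xnB] := pselect (Bd x).
  by apply: subset_closure; split => //; exists false.
have hcl : closure (K w)° x.
  by apply: contrapT => ncl; apply: xnB; exists w.
move=> N; rewrite nbhsE; case=> O [oO Ox] ON.
have [y [inty Oy]] := hcl O (open_nbhs_nbhs (conj oO Ox)).
have hy : nbhs y ((K w)° `&` O).
  apply: filterI; first exact: nbhs_interior.
  exact: open_nbhs_nbhs (conj oO Oy).
have [z zD [zint zO]] := @Dn_dense R n y _ hy.
exists z; split; last exact: ON.
split; last exact: interior_subset.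
by exists true.
Qed.

Theorem proposition7p2 (d : measure_display) (T : measurableType d)
    (R : realType) (n : nat) (K : T -> set (Cn R n)) :
  random_compact_set K ->
  ((countable (range K) \/
    countable (\bigcup_(w in [set: T]) (K w `\` closure (interior (K w))))) ->
    uniformly_separable K) /\
  ((forall w, exists2 U : set (Cn R n), open U /\ bounded_set U & K w = closure U) ->
    uniformly_separable K).
Proof.
move=> [Kc _]; split.
  case=> [cK|cB]; last exact: sep_bd.
  have /choice[S hS] := @compact_sep R n.
  exists (\bigcup_(A in range K) S A).
    by apply: bigcup_countable => // A _; have [] := hS A.
  move=> w x Kx.
  have [_ [SA cS]] := hS (K w).
  have [_ cKw] := Kc w.
  apply: (closureS _ (cS cKw x Kx)) => y Sy; split; last exact: SA.
  by exists (K w) => //; exists w.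
move=> hU; apply: sep_bd.
have -> : \bigcup_(w in [set: T]) (K w `\` closure (interior (K w))) = set0.
  apply/seteqP; split=> // x [w _ [Kx nx]]; apply: nx.
  have [U [oU _] KU] := hU w.
  rewrite KU in Kx *; apply: closureS Kx => u Uu.
  have : U° u by move: oU; rewrite openE; apply.
  by apply: interiorS; exact: subset_closure.
exact: countable0.
Qed.
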